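(* Let $G$ be a simple undirected graph on $\{1,\dots,n\}$ ($n\ge2$) with adjacency $g_{ij}$ ($g_{ii}=0$) and $m$ edges. Suppose the potential outcomes are $Y_i(\mathbf z)=\alpha_i+\beta_iz_i+\gamma\sum_jg_{ij}z_j$ for constants $\alpha_i,\beta_i,\gamma$. Under a restricted Bernoulli design with parameter $p\in(0,1)$, the estimator $$\hat\beta_{naive}=\frac{\sum_i Y_i^{obs}Z_i}{\sum_i Z_i}-\frac{\sum_i Y_i^{obs}(1-Z_i)}{\sum_i(1-Z_i)}$$ satisfies $\mathbb E[\hat\beta_{naive}]-\mathrm{DTE}=-\gamma\frac{2m}{n(n-1)}$, where $\mathrm{DTE}=\frac1n\sum_i\beta_i$.
   Context: Restricted Bernoulli design with parameter $p$: $P(\mathbf Z=\mathbf z)=p^{|\mathbf z|}(1-p)^{n-|\mathbf z|}/(1-p^n-(1-p)^n)$ if $0<|\mathbf z|<n$ and $0$ otherwise, where $|\mathbf z|=\sum_iz_i$. $Y_i^{obs}=Y_i(\mathbf Z)$. DTE is the average over units of the outcome when the unit is treated and no neighbor is treated minus the outcome when no unit is treated. *)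

(* Defs.v *)
From mathcomp Require Import all_boot all_order all_algebra.
Set Implicit Arguments. Unset Strict Implicit. Unset Printing Implicit Defensive.
Import Order.TTheory GRing.Theory Num.Theory.
Local Open Scope ring_scope.

Notation assignment n := {ffun 'I_n -> bool}.

Definition ntreated n (z : assignment n) : nat := #|[set i | z i]|.

Definition rbern_prob (R : fieldType) n (p : R) (z : assignment n) : R :=
  if (0 < ntreated z)%N && (ntreated z < n)%N then
    p ^+ ntreated z * (1 - p) ^+ (n - ntreated z) / (1 - p ^+ n - (1 - p) ^+ n)
  else 0.

Definition rbern_E (R : fieldType) n (p : R) (X : assignment n -> R) : R :=
  \sum_(z : assignment n) rbern_prob p z * X z.

Definition simple_graph n (g : 'I_n -> 'I_n -> bool) : Prop :=
  (forall i j, g i j = g j i) /\ (forall i, g i i = false).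

Definition nedges n (g : 'I_n -> 'I_n -> bool) : nat :=
  #|[set e : 'I_n * 'I_n | (e.1 < e.2)%N && g e.1 e.2]|.

Definition lin_outcome (R : ringType) n (g : 'I_n -> 'I_n -> bool)
  (alpha beta : 'I_n -> R) (gamma : R) (i : 'I_n) (z : assignment n) : R :=
  alpha i + beta i * (z i)%:R + gamma * \sum_j (g i j)%:R * (z j)%:R.

Definition only n (i : 'I_n) : assignment n := [ffun j => j == i].
Definition none n : assignment n := [ffun _ => false].

(* Direct treatment effect: average over units of the outcome when the unit is
   treated and no neighbour (indeed no other unit) is treated, minus the outcome
   when no unit is treated. *)
Definition DTE (R : fieldType) n (Y : 'I_n -> assignment n -> R) : R :=
  (n%:R)^-1 * \sum_i (Y i (only i) - Y i (none n)).

Definition beta_naive (R : fieldType) n (Y : 'I_n -> assignment n -> R)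
  (z : assignment n) : R :=
  (\sum_i Y i z * (z i)%:R) / (\sum_i ((z i)%:R : R))
  - (\sum_i Y i z * (1 - (z i)%:R)) / (\sum_i (1 - ((z i)%:R : R))).

(* Main.v *)
Require Import Defs.
From mathcomp Require Import all_boot all_order all_algebra all_fingroup.
From mathcomp Require Import ring lra zify.
Import Order.TTheory GRing.Theory Num.Theory.
Set Implicit Arguments. Unset Strict Implicit. Unset Printing Implicit Defensive.
Local Open Scope ring_scope.

Definition actz n (s : {perm 'I_n}) (z : assignment n) : assignment n :=
  [ffun x => z (s x)].

Lemma actz_inj n (s : {perm 'I_n}) : injective (@actz n s).
Proof.
move=> z1 z2 H; apply/ffunP => x.
have := congr1 (fun f : assignment n => f (s^-1%g x)) H.
by rewrite /actz !ffunE permKV.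
Qed.

Lemma ntreated_act n (s : {perm 'I_n}) z : ntreated (actz s z) = ntreated z.
Proof.
rewrite /ntreated -[RHS](card_preimset _ (@perm_inj _ s)).
apply: eq_card => x; rewrite !inE /actz ffunE.
done.
Qed.

Lemma sum_act (R : nmodType) n (s : {perm 'I_n}) (F : assignment n -> R) :
  \sum_z F z = \sum_z F (actz s z).
Proof. by rewrite (reindex_inj (@actz_inj n s)). Qed.

Lemma sym1_eq (R : ringType) n (w : nat -> R) (i j : 'I_n) :
  \sum_z w (ntreated z) * (z i)%:R = \sum_z w (ntreated z) * (z j)%:R.
Proof.
transitivity (\sum_z w (ntreated (actz (tperm i j) z)) * (actz (tperm i j) z i)%:R).
  exact: (reindex_inj (@actz_inj n (tperm i j))).
apply: eq_bigr => z _.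


by rewrite ntreated_act /actz ffunE tpermL.
Qed.

Lemma sum_zR (R : ringType) n (z : assignment n) :
  \sum_i ((z i)%:R : R) = (ntreated z)%:R.
Proof.
rewrite /ntreated -sum1_card natr_sum big_mkcond /=.
rewrite [RHS]big_mkcond; apply: eq_bigr => i _; rewrite inE; by case: (z i).
Qed.

Lemma sym1 (R : numFieldType) n (w : nat -> R) (i : 'I_n) : (0 < n)%N ->
  \sum_(z : assignment n) w (ntreated z) * (z i)%:R =
  (n%:R)^-1 * \sum_(z : assignment n) w (ntreated z) * (ntreated z)%:R.
Proof.
move=> n0.
have -> : \sum_(z : assignment n) w (ntreated z) * (ntreated z)%:R =
   \sum_(j : 'I_n) \sum_(z : assignment n) w (ntreated z) * (z j)%:R.
  rewrite exchange_big; apply: eq_bigr => z _.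
  by rewrite -big_distrr sum_zR.
rewrite (eq_bigr (fun j : 'I_n => \sum_(z : assignment n) w (ntreated z) * (z i)%:R)); last first.
  by move=> j _; rewrite (sym1_eq w j i).
rewrite sumr_const card_ord; set S := (\sum_(z : assignment n) _).
rewrite -(mulr_natl S n) mulrA mulVf ?mul1r //.


by rewrite pnatr_eq0 -lt0n.
Qed.

Lemma sym2_eq (R : ringType) n (w : nat -> R) (i j i' j' : 'I_n) :
  i != j -> i' != j' ->
  \sum_(z : assignment n) w (ntreated z) * ((z i)%:R * (z j)%:R) =
  \sum_(z : assignment n) w (ntreated z) * ((z i')%:R * (z j')%:R).
Proof.
move=> hij hij'.
pose j'' := tperm i i' j.
have hj'' : j'' != i'.
  apply/eqP => E; move: hij; rewrite -(inj_eq (@perm_inj _ (tperm i i'))).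
  by rewrite tpermL -/j'' E eqxx.
pose s := (tperm i i' * tperm j'' j')%g.
have si : s i = i' by rewrite /s permM tpermL tpermD // eq_sym.
have sj : s j = j' by rewrite /s permM -/j'' tpermL.
transitivity (\sum_z w (ntreated (actz s z)) *
   ((actz s z i)%:R * (actz s z j)%:R)).
  exact: (reindex_inj (@actz_inj n s)).
apply: eq_bigr => z _.
by rewrite ntreated_act /actz !ffunE si sj.
Qed.

Lemma pair_sum (R : ringType) n (z : assignment n) :
  \sum_(a : 'I_n) \sum_(b : 'I_n | b != a) ((z a)%:R * (z b)%:R : R) =
  (ntreated z)%:R * ((ntreated z)%:R - 1).
Proof.
rewrite -sum_zR big_distrl /=; apply: eq_bigr => a _.
rewrite mulrBr mulr1 big_distrr /= [in RHS](bigD1 a) //= addrAC.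
by case: (z a); rewrite ?mul1r ?subrr ?mul0r ?subr0 ?add0r.
Qed.

Lemma sym2 (R : numFieldType) n (w : nat -> R) (i j : 'I_n) : i != j ->
  \sum_(z : assignment n) w (ntreated z) * ((z i)%:R * (z j)%:R) =
  (n%:R * (n%:R - 1))^-1 *
    \sum_(z : assignment n) w (ntreated z) * ((ntreated z)%:R * ((ntreated z)%:R - 1)).
Proof.
move=> hij.
have n1 : (1 < n)%N.
  case: n i j hij => [[]//|[|n]] i j hij //.
  by move: hij; rewrite (ord1 i) (ord1 j) eqxx.
set S := \sum_(z : assignment n) w (ntreated z) * ((z i)%:R * (z j)%:R).
have -> : \sum_(z : assignment n) w (ntreated z) * ((ntreated z)%:R * ((ntreated z)%:R - 1)) =
   \sum_(a : 'I_n) \sum_(b : 'I_n | b != a) S.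
  transitivity (\sum_(z : assignment n) \sum_(a : 'I_n) \sum_(b : 'I_n | b != a)
      w (ntreated z) * ((z a)%:R * (z b)%:R)).
    apply: eq_bigr => z _; rewrite -pair_sum big_distrr /=.
    by apply: eq_bigr => a _; rewrite big_distrr.
  rewrite exchange_big /=; apply: eq_bigr => a _.
  rewrite exchange_big /=; apply: eq_bigr => b hb.
  by rewrite /S (@sym2_eq _ _ w a b i j) // eq_sym.
have E : forall a : 'I_n, \sum_(b : 'I_n | b != a) S = S * (n%:R - 1).
  move=> a; rewrite sumr_const.
  have -> : #|(fun b : 'I_n => b != a)| = n.-1.
    by rewrite -[in RHS](card_ord n) -(cardC1 a); apply: eq_card.
  have h1 : (n%:R - 1 : R) = (n.-1)%:R by rewrite -subn1 natrB ?(ltnW n1).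
  by rewrite h1 mulr_natr.
rewrite (eq_bigr (fun a : 'I_n => S * (n%:R - 1))) //.
rewrite sumr_const card_ord.
have nz : (n%:R : R) != 0 by rewrite pnatr_eq0 -lt0n (ltnW n1).
have nz1 : (n%:R - 1 : R) != 0.
  by rewrite subr_eq0 pnatr_eq1; case: n n1 {i j hij S E nz} => [|[|]].
field.
by rewrite nz nz1.
Qed.

Lemma nedges_sum (R : ringType) n (g : 'I_n -> 'I_n -> bool) :
  ((nedges g)%:R : R) = \sum_(i : 'I_n) \sum_(j : 'I_n) (((i < j)%N && g i j))%:R.
Proof.
rewrite /nedges -sum1_card natr_sum pair_bigA big_mkcond /=.
by apply: eq_bigr => e _; rewrite inE; case: ifP.
Qed.

Lemma gsum (R : ringType) n (g : 'I_n -> 'I_n -> bool) : simple_graph g ->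
  \sum_(i : 'I_n) \sum_(j : 'I_n) ((g i j)%:R : R) = (2 * nedges g)%:R.
Proof.
move=> [gs gi].
rewrite mul2n -addnn natrD nedges_sum.
transitivity (\sum_(i : 'I_n) \sum_(j : 'I_n) ((((i < j)%N && g i j))%:R : R) +
  \sum_(i : 'I_n) \sum_(j : 'I_n) ((((j < i)%N && g i j))%:R : R)).
  rewrite -big_split; apply: eq_bigr => i _; rewrite -big_split; apply: eq_bigr => j _.
  case: (ltngtP i j) => h /=; rewrite ?addr0 ?add0r //.
  by rewrite (ord_inj h) gi.
f_equal; rewrite exchange_big; apply: eq_bigr => i _; apply: eq_bigr => j _.
by rewrite gs.
Qed.

Lemma gweighted (R : ringType) n (g : 'I_n -> 'I_n -> bool) (X : 'I_n -> 'I_n -> R) (B : R) :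
  simple_graph g -> (forall i j, i != j -> X i j = B) ->
  \sum_(i : 'I_n) \sum_(j : 'I_n) (g i j)%:R * X i j = (2 * nedges g)%:R * B.
Proof.
move=> hg hX; rewrite -(gsum R hg) big_distrl /=; apply: eq_bigr => i _.
rewrite big_distrl /=; apply: eq_bigr => j _.
case: (eqVneq i j) => [->|hij]; first by rewrite hg.2 !mul0r.
by rewrite hX.
Qed.

Definition full n : assignment n := [ffun _ => true].

Lemma ntreated_none n : ntreated (none n) = 0%N.
Proof. by apply/eqP; rewrite cards_eq0; apply/eqP/setP => i; rewrite !inE ffunE. Qed.

Lemma ntreated_full n : ntreated (full n) = n.
Proof. by rewrite /ntreated -[RHS](card_ord n); apply: eq_card => i; rewrite !inE ffunE. Qed.

Lemma ntreated_compl n (z : assignment n) :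
  (ntreated z + #|[set i | ~~ z i]|)%N = n.
Proof.
rewrite /ntreated -[RHS](card_ord n) -(cardsC [set i | z i]).
by congr (_ + _)%N; apply: eq_card => i; rewrite !inE.
Qed.

Lemma ntreated0 n (z : assignment n) : ntreated z = 0%N -> z = none n.
Proof.
move=> /card0_eq h; apply/ffunP => i; rewrite ffunE.
by have := h i; rewrite !inE => ->.
Qed.

Lemma ntreatedn n (z : assignment n) : ntreated z = n -> z = full n.
Proof.
move=> h; have := ntreated_compl z; rewrite h.
have h0 : forall m k : nat, (m + k)%N = m -> k = 0%N by move=> m k; lia.
move=> /h0 /card0_eq h2.
apply/ffunP => i; rewrite ffunE; have := h2 i; rewrite !inE.
by case: (z i).
Qed.

Lemma q_prod (R : comRingType) n (p : R) (z : assignment n) :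
  p ^+ ntreated z * (1 - p) ^+ (n - ntreated z) =
  \prod_(i : 'I_n) (if z i then p else 1 - p).
Proof.
symmetry; rewrite (bigID (fun i => z i)) /=.
rewrite (eq_bigr (fun _ => p)); last by move=> i ->.
rewrite [X in _ * X](eq_bigr (fun _ => 1 - p)); last by move=> i /negbTE ->.
rewrite -prodr_const.
have -> : (n - ntreated z)%N = #|[set i | ~~ z i]|.
  by rewrite -{1}(ntreated_compl z) addKn.
rewrite -prodr_const.
have E1 : \prod_(i < n | z i) p = \prod_(i in [set i | z i]) p.
  by apply: eq_bigl => i; rewrite inE.
have E2 : \prod_(i < n | ~~ z i) (1 - p) = \prod_(i in [set i | ~~ z i]) (1 - p).
  by apply: eq_bigl => i; rewrite inE.
by rewrite E1 E2.
Qed.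

Lemma q_sum (R : comRingType) n (p : R) :
  \sum_(z : assignment n) p ^+ ntreated z * (1 - p) ^+ (n - ntreated z) = 1.
Proof.
rewrite (eq_bigr _ (fun z _ => q_prod p z)).
rewrite -(bigA_distr_bigA (fun (i : 'I_n) (b : bool) => if b then p else 1 - p)) /=.
rewrite big1 // => i _; rewrite big_bool /=.
by rewrite addrC subrK.
Qed.

Definition wP (R : fieldType) n (p : R) (k : nat) : R :=
  if (0 < k)%N && (k < n)%N then
    p ^+ k * (1 - p) ^+ (n - k) / (1 - p ^+ n - (1 - p) ^+ n)
  else 0.

Lemma D_pos (R : realFieldType) n (p : R) : (1 < n)%N -> 0 < p -> p < 1 ->
  0 < 1 - p ^+ n - (1 - p) ^+ n.
Proof.
move=> n1 p0 p1.
have h1 : p ^+ n < p by rewrite -{2}(expr1 p) ltr_iXn2l.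
have h2 : (1 - p) ^+ n < 1 - p.
  by rewrite -{2}(expr1 (1 - p)) ltr_iXn2l // ?subr_gt0 // ltrBlDr ltrDl.
lra.
Qed.

Lemma sum_eq1 (R : ringType) n (a : assignment n) (F : assignment n -> R) :
  \sum_(z : assignment n) (z == a)%:R * F z = F a.
Proof.
rewrite (bigD1 a) //= eqxx mul1r big1 ?addr0 // => z /negbTE ->.
by rewrite mul0r.
Qed.

Lemma ntreated_le n (z : assignment n) : (ntreated z <= n)%N.
Proof. have := ntreated_compl z; lia. Qed.

Lemma wP_sum (R : realFieldType) n (p : R) : (1 < n)%N -> 0 < p -> p < 1 ->
  \sum_(z : assignment n) wP n p (ntreated z) = 1.
Proof.
move=> n1 p0 p1.
have Dp := D_pos n1 p0 p1.
set D := 1 - p ^+ n - (1 - p) ^+ n in Dp *.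
have Dn : D != 0 by rewrite gt_eqF.
pose q (z : assignment n) := p ^+ ntreated z * (1 - p) ^+ (n - ntreated z).
have nf : none n != full n.
  apply/negP => /eqP E; have := ntreated_none n; rewrite E ntreated_full.
  by move=> E'; rewrite E' in n1.
have key : \sum_(z : assignment n) wP n p (ntreated z) * D =
   \sum_(z : assignment n) (q z - (z == none n)%:R * q z - (z == full n)%:R * q z).
  apply: eq_bigr => z _.
  case: (eqVneq z (none n)) => [->|zn].
    rewrite (negbTE nf) /wP ntreated_none /=. by rewrite mul0r mul1r mul0r subrr subr0.
  case: (eqVneq z (full n)) => [->|zf].
    rewrite /wP ntreated_full ltnn andbF. by rewrite mul0r mul1r mul0r subr0 subrr.
  have k0 : (0 < ntreated z)%N.
    by rewrite lt0n; apply/negP => /eqP /ntreated0 E; rewrite E eqxx in zn.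
  have kn : (ntreated z < n)%N.
    rewrite ltn_neqAle ntreated_le andbT; apply/negP => /eqP /ntreatedn E.
    by rewrite E eqxx in zf.
  by rewrite /wP k0 kn /= mulfVK // !mul0r !subr0.
rewrite !sumrB !sum_eq1 /q q_sum ntreated_none ntreated_full subn0 subnn !expr0 mul1r mulr1 in key.
rewrite -big_distrl /= in key.
by apply: (mulIf Dn); rewrite key mul1r /D addrAC.
Qed.

Lemma swap3 (R : comRingType) n (w : nat -> R) (c : 'I_n -> 'I_n -> R)
  (F : assignment n -> 'I_n -> 'I_n -> R) :
  \sum_(z : assignment n) w (ntreated z) * \sum_(i : 'I_n) \sum_(j : 'I_n) c i j * F z i j =
  \sum_(i : 'I_n) \sum_(j : 'I_n) c i j * \sum_(z : assignment n) w (ntreated z) * F z i j.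
Proof.
transitivity (\sum_(z : assignment n) \sum_(i : 'I_n) \sum_(j : 'I_n)
   c i j * (w (ntreated z) * F z i j)).
  apply: eq_bigr => z _; rewrite big_distrr /=; apply: eq_bigr => i _.
  rewrite big_distrr /=; apply: eq_bigr => j _; by rewrite mulrCA.
rewrite exchange_big /=; apply: eq_bigr => i _.
rewrite exchange_big /=; apply: eq_bigr => j _.
by rewrite big_distrr.
Qed.

Lemma swap1 (R : comRingType) n (w : nat -> R) (a : 'I_n -> R)
  (F : assignment n -> 'I_n -> R) :
  \sum_(z : assignment n) w (ntreated z) * \sum_(i : 'I_n) a i * F z i =
  \sum_(i : 'I_n) a i * \sum_(z : assignment n) w (ntreated z) * F z i.
Proof.
transitivity (\sum_(z : assignment n) \sum_(i : 'I_n) a i * (w (ntreated z) * F z i)).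
  apply: eq_bigr => z _; rewrite big_distrr /=; apply: eq_bigr => i _.
  by rewrite mulrCA.
rewrite exchange_big /=; apply: eq_bigr => i _.
by rewrite big_distrr.
Qed.

Lemma ExpA (R : numFieldType) n (w : nat -> R) (a : 'I_n -> R) : (0 < n)%N ->
  \sum_(z : assignment n) w (ntreated z) * \sum_(i : 'I_n) a i * (z i)%:R =
  (\sum_(i : 'I_n) a i) * ((n%:R)^-1 *
     \sum_(z : assignment n) w (ntreated z) * (ntreated z)%:R).
Proof.
move=> n0; rewrite (swap1 w a (fun z i => (z i)%:R)) big_distrl /=.
by apply: eq_bigr => i _; rewrite sym1.
Qed.

Lemma ExpG (R : numFieldType) n (g : 'I_n -> 'I_n -> bool) (w : nat -> R) :
  simple_graph g ->
  \sum_(z : assignment n) w (ntreated z) *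
     \sum_(i : 'I_n) \sum_(j : 'I_n) (g i j)%:R * ((z i)%:R * (z j)%:R) =
  (2 * nedges g)%:R * ((n%:R * (n%:R - 1))^-1 *
    \sum_(z : assignment n) w (ntreated z) * ((ntreated z)%:R * ((ntreated z)%:R - 1))).
Proof.
move=> hg.
rewrite (swap3 w (fun i j => (g i j)%:R) (fun z i j => (z i)%:R * (z j)%:R)) /=.
by apply: gweighted => // i j hij; rewrite sym2.
Qed.

Lemma ExpA' (R : numFieldType) n (w : nat -> R) (a : 'I_n -> R) : (0 < n)%N ->
  \sum_(z : assignment n) w (ntreated z) * \sum_(i : 'I_n) a i * (1 - (z i)%:R) =
  (\sum_(i : 'I_n) a i) * (\sum_(z : assignment n) w (ntreated z) - (n%:R)^-1 *
     \sum_(z : assignment n) w (ntreated z) * (ntreated z)%:R).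
Proof.
move=> n0.
transitivity (\sum_(z : assignment n) (w (ntreated z) * \sum_(i : 'I_n) a i
   - w (ntreated z) * \sum_(i : 'I_n) a i * (z i)%:R)).
  apply: eq_bigr => z _; rewrite -mulrBr -sumrB; congr (_ * _).
  by apply: eq_bigr => i _; rewrite mulrBr mulr1.
rewrite sumrB ExpA // -big_distrl /= mulrBr; congr (_ - _); by rewrite mulrC.
Qed.

Lemma ExpG' (R : numFieldType) n (g : 'I_n -> 'I_n -> bool) (w : nat -> R) :
  simple_graph g -> (0 < n)%N ->
  \sum_(z : assignment n) w (ntreated z) *
     \sum_(i : 'I_n) \sum_(j : 'I_n) (g i j)%:R * ((z j)%:R - (z i)%:R * (z j)%:R) =
  (2 * nedges g)%:R * ((n%:R)^-1 * \sum_(z : assignment n) w (ntreated z) * (ntreated z)%:R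
   - (n%:R * (n%:R - 1))^-1 *
    \sum_(z : assignment n) w (ntreated z) * ((ntreated z)%:R * ((ntreated z)%:R - 1))).
Proof.
move=> hg n0.
rewrite (swap3 w (fun i j => (g i j)%:R) (fun z i j => (z j)%:R - (z i)%:R * (z j)%:R)) /=.
apply: gweighted => // i j hij.
under eq_bigr do rewrite mulrBr.
by rewrite sumrB sym1 // sym2.
Qed.

Lemma T_expand (R : comRingType) n (g : 'I_n -> 'I_n -> bool) alpha beta (gamma : R) z :
  \sum_(i : 'I_n) lin_outcome g alpha beta gamma i z * (z i)%:R =
  \sum_(i : 'I_n) (alpha i + beta i) * (z i)%:R +
  gamma * \sum_(i : 'I_n) \sum_(j : 'I_n) (g i j)%:R * ((z i)%:R * (z j)%:R).
Proof.
rewrite big_distrr -big_split /=; apply: eq_bigr => i _.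
rewrite /lin_outcome; case: (z i) => /=.
  under [in RHS]eq_bigr do rewrite mul1r.
  by rewrite !mulr1.
under [in RHS]eq_bigr do rewrite mul0r mulr0.
by rewrite big1_eq !mulr0 add0r.
Qed.

Lemma C_expand (R : comRingType) n (g : 'I_n -> 'I_n -> bool) alpha beta (gamma : R) z :
  \sum_(i : 'I_n) lin_outcome g alpha beta gamma i z * (1 - (z i)%:R) =
  \sum_(i : 'I_n) alpha i * (1 - (z i)%:R) +
  gamma * \sum_(i : 'I_n) \sum_(j : 'I_n) (g i j)%:R * ((z j)%:R - (z i)%:R * (z j)%:R).
Proof.
rewrite big_distrr -big_split /=; apply: eq_bigr => i _.
rewrite /lin_outcome; case: (z i) => /=.
  under [in RHS]eq_bigr do rewrite mul1r subrr mulr0.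
  by rewrite big1_eq subrr !mulr0 add0r.
under [in RHS]eq_bigr do rewrite mul0r subr0.
by rewrite !subr0 !mulr1 mulr0 addr0.
Qed.

Lemma DTE_lin (R : fieldType) n (g : 'I_n -> 'I_n -> bool) alpha beta (gamma : R) :
  simple_graph g ->
  DTE (lin_outcome g alpha beta gamma) = (n%:R)^-1 * \sum_(i : 'I_n) beta i.
Proof.
move=> [_ gi]; rewrite /DTE; congr (_ * _); apply: eq_bigr => i _.
rewrite /lin_outcome /only /none !ffunE eqxx /=.
rewrite (bigD1 i) //= ffunE eqxx gi mul0r add0r big1; last first.
  by move=> j /negbTE hj; rewrite ffunE hj mulr0.
rewrite big1; last by move=> j _; rewrite ffunE mulr0.
by rewrite !mulr0 !addr0 mulr1 addrC addKr.
Qed.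

Definition w1 (R : fieldType) n (p : R) k := wP n p k / k%:R.
Definition w2 (R : fieldType) n (p : R) k := wP n p k / (n%:R - k%:R).

Lemma wP_case (R : fieldType) n (p : R) k : wP n p k = 0 \/ ((0 < k)%N && (k < n)%N).
Proof. by rewrite /wP; case: ifP; auto. Qed.

Lemma pw_a (R : numFieldType) n (p : R) k : w1 n p k * k%:R = wP n p k.
Proof.
rewrite /w1; case: (wP_case n p k) => [->|/andP [k0 kn]]; first by rewrite !mul0r.
by rewrite mulfVK // pnatr_eq0 -lt0n.
Qed.

Lemma pw_b (R : numFieldType) n (p : R) k :
  w1 n p k * (k%:R * (k%:R - 1)) = wP n p k * k%:R - wP n p k.
Proof. by rewrite mulrA pw_a mulrBr mulr1. Qed.

Lemma nk0 (R : numFieldType) n k : (k < n)%N -> (n%:R - k%:R : R) != 0.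
Proof. by move=> kn; rewrite subr_eq0 eqr_nat eq_sym ltn_eqF. Qed.

Lemma pw_c (R : numFieldType) n (p : R) k : (0 < n)%N ->
  w2 n p k - (n%:R)^-1 * (w2 n p k * k%:R) = (n%:R)^-1 * wP n p k.
Proof.
move=> n0; rewrite /w2; case: (wP_case n p k) => [->|/andP [k0 kn]].
  by rewrite !mul0r mulr0 subr0.
have h1 := nk0 R kn.
have h2 : (n%:R : R) != 0 by rewrite pnatr_eq0 -lt0n.
by field; rewrite h1 h2.
Qed.

Lemma pw_d (R : numFieldType) n (p : R) k : (1 < n)%N ->
  (n%:R)^-1 * (w2 n p k * k%:R) -
  (n%:R * (n%:R - 1))^-1 * (w2 n p k * (k%:R * (k%:R - 1))) =
  (n%:R * (n%:R - 1))^-1 * (wP n p k * k%:R).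
Proof.
move=> n1; rewrite /w2; case: (wP_case n p k) => [->|/andP [k0 kn]].
  by rewrite !mul0r !mulr0 subr0.
have h1 := nk0 R kn.
have h2 : (n%:R : R) != 0 by rewrite pnatr_eq0 -lt0n (ltnW n1).
have h3 : (n%:R - 1 : R) != 0.
  by rewrite subr_eq0 pnatr_eq1; case: n n1 {h1 h2 kn} => [|[|]].
by field; rewrite h1 h2 h3.
Qed.

Unset Implicit Arguments.
Theorem proposition13 (R : realFieldType) (n : nat) (hn : (2 <= n)%N)
  (g : 'I_n -> 'I_n -> bool) (hg : simple_graph g)
  (alpha beta : 'I_n -> R) (gamma p : R) (hp0 : 0 < p) (hp1 : p < 1) :
  rbern_E p (beta_naive (lin_outcome g alpha beta gamma))
    - DTE (lin_outcome g alpha beta gamma)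
  = - gamma * ((2 * nedges g)%:R / (n%:R * (n%:R - 1))).
Proof.
have n0 : (0 < n)%N by apply: ltnW.
rewrite DTE_lin //.
have E : rbern_E p (beta_naive (lin_outcome g alpha beta gamma)) =
  \sum_(z : assignment n) w1 n p (ntreated z) *
     \sum_(i : 'I_n) (alpha i + beta i) * (z i)%:R +
  gamma * \sum_(z : assignment n) w1 n p (ntreated z) *
      \sum_(i : 'I_n) \sum_(j : 'I_n) (g i j)%:R * ((z i)%:R * (z j)%:R)
  - (\sum_(z : assignment n) w2 n p (ntreated z) *
     \sum_(i : 'I_n) alpha i * (1 - (z i)%:R) +
     gamma * \sum_(z : assignment n) w2 n p (ntreated z) *
      \sum_(i : 'I_n) \sum_(j : 'I_n) (g i j)%:R * ((z j)%:R - (z i)%:R * (z j)%:R)).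
  rewrite !big_distrr -!big_split -sumrB /rbern_E; apply: eq_bigr => z _.
  rewrite /beta_naive T_expand C_expand sum_zR sumrB sumr_const card_ord sum_zR.
  rewrite /w1 /w2 /rbern_prob -/(wP n p (ntreated z)).
  by rewrite /=; ring.
have Sw := wP_sum hn hp0 hp1.
set K := \sum_(z : assignment n) wP n p (ntreated z) * (ntreated z)%:R.
have Ia : \sum_(z : assignment n) w1 n p (ntreated z) * (ntreated z)%:R =
    \sum_(z : assignment n) wP n p (ntreated z).
  by apply: eq_bigr => z _; rewrite pw_a.
rewrite Sw in Ia.
have Ib : \sum_(z : assignment n) w1 n p (ntreated z) *
     ((ntreated z)%:R * ((ntreated z)%:R - 1)) = K - \sum_(z : assignment n) wP n p (ntreated z).
  by rewrite -sumrB; apply: eq_bigr => z _; rewrite pw_b.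
rewrite Sw in Ib.
have Ic : \sum_(z : assignment n) w2 n p (ntreated z) - (n%:R)^-1 *
     \sum_(z : assignment n) w2 n p (ntreated z) * (ntreated z)%:R =
     (n%:R)^-1 * \sum_(z : assignment n) wP n p (ntreated z).
  rewrite !big_distrr -sumrB /=; apply: eq_bigr => z _.
  by rewrite pw_c.
rewrite Sw mulr1 in Ic.
have Id : (n%:R)^-1 * \sum_(z : assignment n) w2 n p (ntreated z) * (ntreated z)%:R
   - (n%:R * (n%:R - 1))^-1 * \sum_(z : assignment n) w2 n p (ntreated z) *
     ((ntreated z)%:R * ((ntreated z)%:R - 1)) = (n%:R * (n%:R - 1))^-1 * K.
  rewrite !big_distrr -sumrB /=; apply: eq_bigr => z _.
  by rewrite pw_d.
rewrite E ExpA // ExpG // ExpA' // ExpG' // Ia Ib Ic Id big_split /=.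
have h2 : (n%:R : R) != 0 by rewrite pnatr_eq0 -lt0n.
have h3 : (n%:R - 1 : R) != 0.
  by rewrite subr_eq0 pnatr_eq1; case: n hn {E K Sw Ia Ib Ic Id alpha beta g hg n0 h2} => [|[|]].
by field; rewrite h2 h3.
Qed.
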